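(* Let $\tilde{\mathbf{M}}$ be a real $n\times n$ skew-symmetric matrix. Then the optimization problem $\min_{\mathbf{M}\in\mathcal{M}_T(n)}\|\tilde{\mathbf{M}}-\mathbf{M}\|_F^2$ has the closed-form solution $\mathbf{M}^\ast=(\tilde{\mathbf{M}}\mathds{1}+\mathds{1}\tilde{\mathbf{M}})/n$.
   Context: $\mathds{1}$ is the $n\times n$ all-ones matrix; $\|\cdot\|_F$ is the Frobenius norm. A TDOA matrix is an $n\times n$ real matrix whose $(i,j)$ entry is $\tau_i-\tau_j$ for some $(\tau_1,\dots,\tau_n)\in\mathbb{R}^n$; $\mathcal{M}_T(n)$ is the set of all $n\times n$ TDOA matrices. In the paper $\tilde{\mathbf{M}}$ is a measured TDOA matrix, $\tilde{\mathbf{M}}=\mathbf{M}+\mathbf{N}$ with $\mathbf{M}\in\mathcal{M}_T(n)$ and $\mathbf{N}$ a skew-symmetric noise matrix, hence skew-symmetric. *)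

(* Defs.v *)
From mathcomp Require Import all_boot all_order all_algebra.
Set Implicit Arguments. Unset Strict Implicit. Unset Printing Implicit Defensive.
Import Order.TTheory GRing.Theory Num.Theory.
Local Open Scope ring_scope.

Definition ones_mx (R : nzRingType) (n : nat) : 'M[R]_n := const_mx 1.

Definition frob2 (R : nzRingType) (n : nat) (A : 'M[R]_n) : R :=
  \sum_(i < n) \sum_(j < n) (A i j) ^+ 2.

Definition is_tdoa (R : nzRingType) (n : nat) (M : 'M[R]_n) : Prop :=
  exists tau : 'I_n -> R, forall i j, M i j = tau i - tau j.

(* Main.v *)
Require Import Defs.
From mathcomp Require Import all_boot all_order all_algebra.
From mathcomp Require Import ring lra.
Import Order.TTheory GRing.Theory Num.Theory.
Local Open Scope ring_scope.

Theorem theorem3 (R : realFieldType) (n : nat) (Mt : 'M[R]_n) :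
  Mt^T = - Mt ->
  let Mstar := (n%:R)^-1 *: (Mt *m ones_mx R n + ones_mx R n *m Mt) in
  [/\ is_tdoa Mstar,
      (forall M : 'M[R]_n, is_tdoa M -> frob2 (Mt - Mstar) <= frob2 (Mt - M))
    & (forall M : 'M[R]_n, is_tdoa M -> frob2 (Mt - M) <= frob2 (Mt - Mstar) ->
         M = Mstar)].
Proof.
case: n Mt => [|n] Mt hT Mstar.
  split.
  - by exists (fun _ => 0) => [[]].
  - by move=> M _; rewrite /frob2 !big_ord0.
  - by move=> M _ _; apply/matrixP => -[].
have sk : forall i j, Mt i j = - Mt j i.
  move=> i j; have := congr1 (fun A : 'M[R]_n.+1 => A j i) hT; by rewrite !mxE => ->.
pose r i := \sum_(k < n.+1) Mt i k.
have sr : \sum_(i < n.+1) r i = 0.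
  have h : \sum_(i < n.+1) r i = - \sum_(i < n.+1) r i.
    rewrite /r [LHS]exchange_big /= -sumrN; apply: eq_bigr => i _.
    rewrite -sumrN; apply: eq_bigr => k _; exact: sk.
  lra.
have Ms : forall i j, Mstar i j = (n.+1%:R)^-1 * (r i - r j).
  move=> i j; rewrite /Mstar /ones_mx !mxE; congr (_ * _).
  rewrite /r; congr (_ + _).
    by apply: eq_bigr => k _; rewrite mxE mulr1.
  rewrite -sumrN; apply: eq_bigr => k _; rewrite mxE mul1r; exact: sk.
have n0 : (n.+1)%:R != 0 :> R by rewrite pnatr_eq0.
pose E i j := Mt i j - Mstar i j.
have rowE : forall i, \sum_j E i j = 0.
  move=> i; rewrite /E sumrB (eq_bigr _ (fun j _ => Ms i j)).
  rewrite -mulr_sumr sumrB sr subr0 sumr_const card_ord -[r i *+ _]mulr_natr.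
  rewrite mulrC -mulrA mulfV // mulr1 /r; lra.
have colE : forall j, \sum_i E i j = 0.
  move=> j; rewrite /E sumrB (eq_bigr _ (fun i _ => Ms i j)).
  rewrite -mulr_sumr sumrB sr sub0r sumr_const card_ord -[r j *+ _]mulr_natr.
  have -> : \sum_i Mt i j = - r j.
    by rewrite /r -sumrN; apply: eq_bigr => k _; exact: sk.
  rewrite mulrN mulrC -mulrA mulfV // mulr1; lra.
have key : forall tau : 'I_n.+1 -> R,
    \sum_i \sum_j (Mt i j - (tau i - tau j)) ^+ 2 =
    \sum_i \sum_j (E i j) ^+ 2 +
    \sum_i \sum_j ((n.+1%:R)^-1 * r i - tau i - ((n.+1%:R)^-1 * r j - tau j)) ^+ 2.
  move=> tau; pose s i := (n.+1%:R)^-1 * r i - tau i.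
  have e : forall i j, (Mt i j - (tau i - tau j)) ^+ 2 =
      (E i j) ^+ 2 + (s i - s j) ^+ 2 + (2 * s i) * E i j - (2 * s j) * E i j.
    move=> i j; rewrite /s /E Ms; ring.
  have c1 : \sum_i \sum_j (2 * s i * E i j) = 0.
    by apply: big1 => i _; rewrite -mulr_sumr rowE mulr0.
  have c2 : \sum_i \sum_j (2 * s j * E i j) = 0.
    by rewrite exchange_big; apply: big1 => j _ /=; rewrite -mulr_sumr colE mulr0.
  under eq_bigr do under eq_bigr do rewrite e.
  under eq_bigr do rewrite sumrB !big_split /=.
  by rewrite sumrB !big_split /= c1 c2 subr0 addr0.
have fE : frob2 (Mt - Mstar) = \sum_i \sum_j (E i j) ^+ 2.
  rewrite /frob2; apply: eq_bigr => i _; apply: eq_bigr => j _; by rewrite mxE [(- Mstar) i j]mxE.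
have fM : forall (M : 'M[R]_n.+1) (tau : 'I_n.+1 -> R), (forall i j, M i j = tau i - tau j) ->
    frob2 (Mt - M) = \sum_i \sum_j (Mt i j - (tau i - tau j)) ^+ 2.
  move=> M tau h; rewrite /frob2; apply: eq_bigr => i _; apply: eq_bigr => j _.
  by rewrite !mxE h.
have B0 : forall F : 'I_n.+1 -> 'I_n.+1 -> R, 0 <= \sum_i \sum_j (F i j) ^+ 2.
  by move=> F; apply: sumr_ge0 => i _; apply: sumr_ge0 => j _; apply: sqr_ge0.
split.
- exists (fun i => (n.+1%:R)^-1 * r i) => i j; by rewrite Ms mulrBr.
- move=> M [tau htau]; rewrite fE (fM M tau htau) key lerDl; exact: B0.
- move=> M [tau htau]; rewrite fE (fM M tau htau) key gerDl => hle.
  pose F i j := n.+1%:R^-1 * r i - tau i - (n.+1%:R^-1 * r j - tau j).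
  have hz : \sum_i \sum_j (F i j) ^+ 2 = 0.
    by apply/eqP; rewrite eq_le hle B0.
  apply/matrixP => i j.
  have hi : \sum_j (F i j) ^+ 2 = 0.
    apply: (psumr_eq0P _ hz) => // k _; apply: sumr_ge0 => l _; exact: sqr_ge0.
  have hij : (F i j) ^+ 2 = 0.
    apply: (psumr_eq0P _ hi) => // k _; exact: sqr_ge0.
  move/eqP: hij; rewrite sqrf_eq0 /F htau Ms => /eqP h.
  apply/eqP; rewrite -subr_eq0; apply/eqP; rewrite mulrBr. move: h; set a := n.+1%:R^-1 * r i; set b := n.+1%:R^-1 * r j; lra.
Qed.
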